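(* Let $\mathcal{T}=\begin{pmatrix}\mathcal{A}&\mathcal{M}\\0&\mathcal{B}\end{pmatrix}$ be a triangular ring in which $\mathcal{A}$ and $\mathcal{B}$ are 2-torsion free. If $\phi:\mathcal{T}\to\mathcal{T}$ is an additive mapping such that $\phi(U)\circ V+U\circ\phi(V)=0$ for all $U,V\in\mathcal{T}$ with $UV=VU=0$, then there exist a derivation $\delta:\mathcal{T}\to\mathcal{T}$ and a multiplier $\eta:\mathcal{T}\to\mathcal{T}$ such that $\phi=\delta+\eta$. If moreover $\phi(I)=0$, then $\phi$ is a derivation.
   Context: A triangular ring: $\mathcal{A},\mathcal{B}$ are unital rings and $\mathcal{M}$ is a unital $(\mathcal{A},\mathcal{B})$-bimodule faithful on both sides (if $A\mathcal{M}=\{0\}$ then $A=0$; if $\mathcal{M}B=\{0\}$ then $B=0$); $\mathcal{T}$ is the set of matrices $\begin{pmatrix}A&M\\0&B\end{pmatrix}$ under usual matrix operations, with identity $I$. 2-torsion free: $2X=0\Rightarrow X=0$. $X\circ Y=XY+YX$. An additive $\delta$ is a derivation if $\delta(XY)=\delta(X)Y+X\delta(Y)$; an additive $\eta$ is a multiplier if $\eta(X)=\eta(I)X=X\eta(I)$ for all $X$. *)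

(* Defs.v *)
From HB Require Import structures.
From mathcomp Require Import all_boot all_order all_algebra.
Set Implicit Arguments. Unset Strict Implicit. Unset Printing Implicit Defensive.
Import GRing.Theory.
Local Open Scope ring_scope.

Definition is_bimodule (A B : pzRingType) (M : zmodType)
    (la : A -> M -> M) (ra : M -> B -> M) : Prop :=
  (forall a m m', la a (m + m') = la a m + la a m') /\
  (forall a a' m, la (a + a') m = la a m + la a' m) /\
  (forall a a' m, la (a * a') m = la a (la a' m)) /\
  (forall m, la 1 m = m) /\
  (forall m m' b, ra (m + m') b = ra m b + ra m' b) /\
  (forall m b b', ra m (b + b') = ra m b + ra m b') /\
  (forall m b b', ra m (b * b') = ra (ra m b) b') /\
  (forall m, ra m 1 = m) /\
  (forall a m b, ra (la a m) b = la a (ra m b)).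

Definition bimod_faithful (A B : pzRingType) (M : zmodType)
    (la : A -> M -> M) (ra : M -> B -> M) : Prop :=
  (forall a, (forall m, la a m = 0) -> a = 0) /\
  (forall b, (forall m, ra m b = 0) -> b = 0).

Definition two_torsion_free (R : zmodType) : Prop :=
  forall x : R, x *+ 2 = 0 -> x = 0.

(* Elements of the triangular ring T = [A M; 0 B]: the matrix [a m; 0 b]. *)
Record tri (A B : pzRingType) (M : zmodType) :=
  Tri { tA : A; tM : M; tB : B }.

Section TriOps.
Variables (A B : pzRingType) (M : zmodType).
Variables (la : A -> M -> M) (ra : M -> B -> M).

Definition tadd (X Y : tri A B M) : tri A B M :=
  Tri (tA X + tA Y) (tM X + tM Y) (tB X + tB Y).

(* usual matrix product:
   [a m; 0 b] [a' m'; 0 b'] = [a a'  a m' + m b'; 0  b b'] *)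
Definition tmul (X Y : tri A B M) : tri A B M :=
  Tri (tA X * tA Y) (la (tA X) (tM Y) + ra (tM X) (tB Y)) (tB X * tB Y).

Definition tzero : tri A B M := Tri 0 0 0.
Definition tone : tri A B M := Tri 1 0 1.

Definition tcirc (X Y : tri A B M) : tri A B M := tadd (tmul X Y) (tmul Y X).

Definition t_additive (f : tri A B M -> tri A B M) : Prop :=
  forall X Y, f (tadd X Y) = tadd (f X) (f Y).

Definition t_derivation (d : tri A B M -> tri A B M) : Prop :=
  t_additive d /\
  forall X Y, d (tmul X Y) = tadd (tmul (d X) Y) (tmul X (d Y)).

Definition t_multiplier (e : tri A B M -> tri A B M) : Prop :=
  t_additive e /\
  forall X, e X = tmul (e tone) X /\ e X = tmul X (e tone).
End TriOps.

(* Main.v *)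
Require Import Defs.
From HB Require Import structures.
From mathcomp Require Import all_boot all_order all_algebra ssrAC.
Local Open Scope ring_scope.
Import GRing.Theory.

Set Implicit Arguments.
Section Bim.
Variables (A B : pzRingType) (M : zmodType) (la : A -> M -> M) (ra : M -> B -> M).
Hypothesis hb : is_bimodule la ra.

Lemma laD a m m' : la a (m + m') = la a m + la a m'. Proof. by case: hb. Qed.
Lemma laDl a a' m : la (a + a') m = la a m + la a' m. Proof. by case: hb => _ []. Qed.
Lemma laM a a' m : la (a * a') m = la a (la a' m). Proof. by case: hb => _ [] _ []. Qed.
Lemma la1 m : la 1 m = m. Proof. by case: hb => _ [] _ [] _ []. Qed.
Lemma raD m m' b : ra (m + m') b = ra m b + ra m' b. Proof. by case: hb => _ [] _ [] _ [] _ []. Qed.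
Lemma raDr m b b' : ra m (b + b') = ra m b + ra m b'. Proof. by case: hb => _ [] _ [] _ [] _ [] _ []. Qed.
Lemma raM m b b' : ra m (b * b') = ra (ra m b) b'. Proof. by case: hb => _ [] _ [] _ [] _ [] _ [] _ []. Qed.
Lemma ra1 m : ra m 1 = m. Proof. by case: hb => _ [] _ [] _ [] _ [] _ [] _ [] _ []. Qed.
Lemma lra a m b : ra (la a m) b = la a (ra m b). Proof. by case: hb => _ [] _ [] _ [] _ [] _ [] _ [] _ []. Qed.

Lemma la0r a : la a 0 = 0.
Proof. by apply: (@addrI _ (la a 0)); rewrite addr0 -laD addr0. Qed.
Lemma la0l m : la 0 m = 0.
Proof. by apply: (@addrI _ (la 0 m)); rewrite addr0 -laDl addr0. Qed.
Lemma ra0l b : ra 0 b = 0.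
Proof. by apply: (@addrI _ (ra 0 b)); rewrite addr0 -raD addr0. Qed.
Lemma ra0r m : ra m 0 = 0.
Proof. by apply: (@addrI _ (ra m 0)); rewrite addr0 -raDr addr0. Qed.
Lemma laNr a m : la a (- m) = - la a m.
Proof. by apply/eqP; rewrite -addr_eq0 -laD addNr la0r. Qed.
Lemma laNl a m : la (- a) m = - la a m.
Proof. by apply/eqP; rewrite -addr_eq0 -laDl addNr la0l. Qed.
Lemma raNl m b : ra (- m) b = - ra m b.
Proof. by apply/eqP; rewrite -addr_eq0 -raD addNr ra0l. Qed.
Lemma raNr m b : ra m (- b) = - ra m b.
Proof. by apply/eqP; rewrite -addr_eq0 -raDr addNr ra0r. Qed.
Lemma laB a m m' : la a (m - m') = la a m - la a m'. Proof. by rewrite laD laNr. Qed.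
Lemma laBl a a' m : la (a - a') m = la a m - la a' m. Proof. by rewrite laDl laNl. Qed.
Lemma raB m m' b : ra (m - m') b = ra m b - ra m' b. Proof. by rewrite raD raNl. Qed.
Lemma raBr m b b' : ra m (b - b') = ra m b - ra m b'. Proof. by rewrite raDr raNr. Qed.
End Bim.

Lemma addf0 (U V : zmodType) (f : U -> V) : (forall x y, f (x + y) = f x + f y) -> f 0 = 0.
Proof. by move=> h; apply: (@addrI _ (f 0)); rewrite addr0 -h addr0. Qed.
Lemma addfN (U V : zmodType) (f : U -> V) : (forall x y, f (x + y) = f x + f y) ->
  forall x, f (- x) = - f x.
Proof. by move=> h x; apply/eqP; rewrite -addr_eq0 -h addNr (@addf0 _ _ f h). Qed.



Definition a1 (A B : pzRingType) (M : zmodType) (phi : tri A B M -> tri A B M) a := tA (phi (Tri a 0 0)).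
Definition mu1 (A B : pzRingType) (M : zmodType) (phi : tri A B M -> tri A B M) a := tM (phi (Tri a 0 0)).
Definition mu2 (A B : pzRingType) (M : zmodType) (phi : tri A B M -> tri A B M) m := tM (phi (Tri 0 m 0)).
Definition mu3 (A B : pzRingType) (M : zmodType) (phi : tri A B M -> tri A B M) b := tM (phi (Tri 0 0 b)).
Definition b3 (A B : pzRingType) (M : zmodType) (phi : tri A B M -> tri A B M) b := tB (phi (Tri 0 0 b)).

Theorem theorem2p11 (A B : pzRingType) (M : zmodType)
    (la : A -> M -> M) (ra : M -> B -> M)
    (hbim : is_bimodule la ra) (hfaith : bimod_faithful la ra)
    (h2A : two_torsion_free A) (h2B : two_torsion_free B)
    (phi : tri A B M -> tri A B M)
    (hadd : t_additive phi)
    (hphi : forall U V : tri A B M,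
        tmul la ra U V = tzero A B M -> tmul la ra V U = tzero A B M ->
        tadd (tcirc la ra (phi U) V) (tcirc la ra U (phi V)) = tzero A B M) :
  (exists delta eta : tri A B M -> tri A B M,
      t_derivation la ra delta /\ t_multiplier la ra eta /\
      forall X, phi X = tadd (delta X) (eta X)) /\
  (phi (tone A B M) = tzero A B M -> t_derivation la ra phi).
Proof.
have lD := laD hbim; have lDl := laDl hbim; have lM := laM hbim; have l1 := la1 hbim.
have rD := raD hbim; have rDr := raDr hbim; have rM := raM hbim; have r1 := ra1 hbim.
have lr := lra hbim; have l0r := la0r hbim; have l0l := la0l hbim; have r0l := ra0l hbim.
have r0r := ra0r hbim; have lNr := laNr hbim; have lNl := laNl hbim; have rNl := raNl hbim.
have rNr := raNr hbim.
have lB := laB hbim; have lBl := laBl hbim; have rB := raB hbim; have rBr := raBr hbim.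
have decomp : forall a m b, phi (Tri a m b) =
   tadd (tadd (phi (Tri a 0 0)) (phi (Tri 0 m 0))) (phi (Tri 0 0 b)).
  by move=> a m b; rewrite -!hadd /tadd /= !addr0 !add0r.
have P0 : phi (Tri 0 0 0) = Tri 0 0 0.
  have := hadd (Tri 0 0 0) (Tri 0 0 0); rewrite /tadd /= !addr0.
  case: (phi (Tri 0 0 0)) => x y z /= [] hx hy hz.
  by congr Tri; apply: (@addrI _ x) || apply: (@addrI _ y) || apply: (@addrI _ z); rewrite addr0.
have key : forall a m n b, la a n + ra m b = 0 ->
  [/\ a * tA (phi (Tri 0 n b)) + tA (phi (Tri 0 n b)) * a = 0,
   la (tA (phi (Tri a m 0))) n + ra (tM (phi (Tri a m 0))) b + ra n (tB (phi (Tri a m 0))) +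
   (la a (tM (phi (Tri 0 n b))) + ra m (tB (phi (Tri 0 n b))) + la (tA (phi (Tri 0 n b))) m) = 0 &
   tB (phi (Tri a m 0)) * b + b * tB (phi (Tri a m 0)) = 0].
  move=> a m n b h.
  have := hphi (Tri a m 0) (Tri 0 n b).
  rewrite /tmul /tzero /tcirc /tadd /= ?mul0r ?mulr0 ?l0l ?l0r ?r0l ?r0r ?h ?addr0.
  move=> H; have {}H := H erefl erefl.
  have HA := f_equal (@tA _ _ _) H; have HM := f_equal (@tM _ _ _) H; have HB := f_equal (@tB _ _ _) H.
  move: HA HM HB => /=.
  rewrite ?mul0r ?mulr0 ?l0l ?r0r ?add0r ?addr0.
  by [].
have two : forall (R : pzRingType) x, two_torsion_free R -> (1 : R) * x + x * 1 = 0 -> x = 0.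
  by move=> R x h; rewrite mul1r mulr1 => e; apply: h; rewrite mulr2n.
have F1 : forall b, tA (phi (Tri 0 0 b)) = 0.
  move=> b; have [] := key 1 0 0 b; first by rewrite l0r r0l addr0.
  by move=> /two -> //.
have F2 : forall a, tB (phi (Tri a 0 0)) = 0.
  move=> a; have [] := key a 0 0 1; first by rewrite l0r r0l addr0.
  move=> _ _; rewrite mul1r mulr1 => e; apply: h2B; by rewrite mulr2n.
have F3 : forall n, tA (phi (Tri 0 n 0)) = 0.
  move=> n; have [] := key 1 (-n) n 1; first by rewrite l1 r1 addrN.
  move=> /two e _ _; have {}e := e h2A; move: e.
  by rewrite decomp /= P0 F1 /= add0r addr0.
have F4 : forall m, tB (phi (Tri 0 m 0)) = 0.
  move=> m; have [] := key 1 m (-m) 1; first by rewrite l1 r1 addNr.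
  move=> _ _; rewrite mul1r mulr1 => e.
  have {}e : tB (phi (Tri 1 m 0)) = 0 by apply: h2B; rewrite mulr2n.
  by move: e; rewrite decomp /= P0 F2 /= add0r addr0.
have CA : forall a m b, tA (phi (Tri a m b)) = a1 phi a.
  by move=> a m b; rewrite decomp /= F1 F3 !addr0.
have CB : forall a m b, tB (phi (Tri a m b)) = b3 phi b.
  by move=> a m b; rewrite decomp /= F2 F4 !add0r.
have CM : forall a m b, tM (phi (Tri a m b)) = mu1 phi a + mu2 phi m + mu3 phi b.
  by move=> a m b; rewrite decomp.
have a10 : a1 phi 0 = 0 by rewrite /a1 P0.
have mu10 : mu1 phi 0 = 0 by rewrite /mu1 P0.
have mu20 : mu2 phi 0 = 0 by rewrite /mu2 P0.
have mu30 : mu3 phi 0 = 0 by rewrite /mu3 P0.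
have b30 : b3 phi 0 = 0 by rewrite /b3 P0.
have E : forall a m n b, la a n + ra m b = 0 ->
   la (a1 phi a) n + ra (mu1 phi a + mu2 phi m) b + la a (mu2 phi n + mu3 phi b) + ra m (b3 phi b) = 0.
  move=> a m n b h; have [_ + _] := key a m n b h.
  rewrite !CA !CB !CM a10 mu10 mu30 b30 r0r l0l !addr0 add0r.
  by rewrite !addrA.
have a1D : forall a a', a1 phi (a + a') = a1 phi a + a1 phi a'.
  by move=> a a'; have := hadd (Tri a 0 0) (Tri a' 0 0); rewrite /tadd /= !addr0 /a1 => ->.
have mu2D : forall m m', mu2 phi (m + m') = mu2 phi m + mu2 phi m'.
  by move=> m m'; have := hadd (Tri 0 m 0) (Tri 0 m' 0); rewrite /tadd /= !addr0 /mu2 => ->.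
have b3D : forall b b', b3 phi (b + b') = b3 phi b + b3 phi b'.
  by move=> b b'; have := hadd (Tri 0 0 b) (Tri 0 0 b'); rewrite /tadd /= !addr0 /b3 => ->.
have mu2N := @addfN _ _ _ mu2D.
have E0 : forall a b, ra (mu1 phi a) b + la a (mu3 phi b) = 0.
  move=> a b; have := E a 0 0 b; rewrite l0r r0l addr0 => /(_ erefl).
  by rewrite l0r mu20 !add0r r0l !addr0.
have Mu3 : forall b, mu3 phi b = - ra (mu1 phi 1) b.
  move=> b; have := E0 1 b; rewrite l1 addrC => /eqP; by rewrite addr_eq0 => /eqP.
have Mu1 : forall a, mu1 phi a = la a (mu1 phi 1).
  move=> a; have := E0 a 1; rewrite r1 Mu3 r1 lNr => /eqP; by rewrite subr_eq0 => /eqP.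
have E' : forall a m n b, la a n + ra m b = 0 ->
   la (a1 phi a) n + ra (mu2 phi m) b + la a (mu2 phi n) + ra m (b3 phi b) = 0.
  move=> a m n b h; have := E _ _ _ _ h; rewrite rD lD => e.
  rewrite -e (AC (1*2*2*1) (1*3*4*6*(2*5))) /= E0 addr0 //.
Show.
have Ci : forall n, la (a1 phi 1) n = ra n (b3 phi 1).
  move=> n; have := E' 1 (-n) n 1; rewrite l1 r1 addrN => /(_ erefl).
  by rewrite mu2N r1 l1 rNl subrK => /eqP; rewrite subr_eq0 => /eqP.
have Cii : forall a n, mu2 phi (la a n) = la (a1 phi a) n + la a (mu2 phi n) - la a (la (a1 phi 1) n).
  move=> a n; have := E' a (- la a n) n 1; rewrite r1 addrN => /(_ erefl).
  rewrite mu2N r1 rNl lr -Ci => e; apply/eqP; rewrite eq_sym -subr_eq0 -e; apply/eqP.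
  by rewrite (AC (1*1*1*1) (1*4*2*3)).
have Ciii : forall m b, mu2 phi (ra m b) = ra (mu2 phi m) b + ra m (b3 phi b) - la (a1 phi 1) (ra m b).
  move=> m b; have := E' 1 m (- ra m b) b; rewrite lNr l1 addNr => /(_ erefl).
  rewrite mu2N l1 lNr => e; apply/eqP; rewrite eq_sym -subr_eq0 -e; apply/eqP.
  by rewrite (AC (1*1*1*1) (3*1*4*2)).
pose dA a := a1 phi a - a1 phi 1 * a.
pose dM m := mu2 phi m - la (a1 phi 1) m.
pose dB b := b3 phi b - b3 phi 1 * b.
have dAE : forall a, dA a = a1 phi a - a1 phi 1 * a by [].
have dME : forall m, dM m = mu2 phi m - la (a1 phi 1) m by [].
have dBE : forall b, dB b = b3 phi b - b3 phi 1 * b by [].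
clearbody dA dM dB.
have LM1 : forall a n, dM (la a n) = la (dA a) n + la a (dM n).
  move=> a n; rewrite !dME dAE Cii lBl lB lM.
  by rewrite (AC (1*1*1*1) (1*4*(2*3))).
have LM2 : forall m b, dM (ra m b) = ra (dM m) b + ra m (dB b).
  move=> m b; rewrite !dME dBE Ciii rB rBr rM -Ci !lr.
  by rewrite (AC (1*1*1*1) (1*3*(2*4))).
have dMD : forall m m', dM (m + m') = dM m + dM m'.
  move=> m m'; rewrite !dME mu2D lD opprD.
  by rewrite (AC (2*2) (1*3*(2*4))).
have Gg : forall P Q R : M, P - Q - ((P - R) + (R - Q)) = 0.
  by move=> P Q R; rewrite [(P - R) + _]addrA subrK subrr.
have LM1' : forall a n, la (dA a) n = dM (la a n) - la a (dM n) by move=> a n; rewrite LM1 addrK.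
have LM2' : forall m b, ra m (dB b) = dM (ra m b) - ra (dM m) b by move=> m b; rewrite LM2 [ra (dM m) b + _]addrC addrK.
have LA : forall a a', dA (a * a') = dA a * a' + a * dA a'.
  move=> a a'; apply/eqP; rewrite -subr_eq0; apply/eqP; apply: (proj1 hfaith) => n.
  rewrite lBl lDl !lM !LM1' !lM lB; exact: Gg.
have LB : forall b b', dB (b * b') = dB b * b' + b * dB b'.
  move=> b b'; apply/eqP; rewrite -subr_eq0; apply/eqP; apply: (proj2 hfaith) => m.
  rewrite rBr rDr !rM !LM2' !rM rB [X in _ - X]addrC; exact: Gg.
have C1 : forall a, a1 phi 1 * a = a * a1 phi 1.
  move=> a; apply/eqP; rewrite -subr_eq0; apply/eqP; apply: (proj1 hfaith) => n.
  by rewrite lBl !lM !Ci lr subrr.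
have C3 : forall b, b3 phi 1 * b = b * b3 phi 1.
  move=> b; apply/eqP; rewrite -subr_eq0; apply/eqP; apply: (proj2 hfaith) => m.
  by rewrite rBr !rM -!Ci lr subrr.
pose c : tri A B M := Tri (a1 phi 1) 0 (b3 phi 1).
pose eta := fun X => tmul la ra c X.
pose delta := fun X : tri A B M => Tri (dA (tA X))
   (la (tA X) (mu1 phi 1) - ra (mu1 phi 1) (tB X) + dM (tM X)) (dB (tB X)).
have Dec : forall X, phi X = tadd (delta X) (eta X).
  case=> a m b; rewrite /tadd /eta /c /tmul /delta /=.
  have -> : phi (Tri a m b) = Tri (tA (phi (Tri a m b))) (tM (phi (Tri a m b))) (tB (phi (Tri a m b))).
    by case: (phi _).
  rewrite CA CM CB Mu1 Mu3; congr Tri.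
  - by rewrite dAE subrK.
  - rewrite r0l addr0 dME -!addrA addNr addr0; congr (_ + _); exact: addrC.
  - by rewrite dBE subrK.
have Dd : t_derivation la ra delta.
  split.
    case=> a m b [a' m' b']; rewrite /tadd /delta /=; congr Tri.
    - by rewrite !dAE a1D mulrDr opprD (AC (2*2) (1*3*(2*4))).
    - by rewrite lDl rDr dMD opprD (AC (2*2*2) ((1*3*5)*(2*4*6))).
    - by rewrite !dBE b3D mulrDr opprD (AC (2*2) (1*3*(2*4))).
  case=> a m b [a' m' b']; rewrite /tmul /tadd /delta /=; congr Tri.
  - exact: LA.
  - rewrite dMD LM1 LM2 !rD rNl lr !lD lNr lM rM.
    apply/esym; rewrite (AC (1*3*4) (5*3*((1*7)*(4*8))*(2*6))) /= subrr addr0.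
    done.
  - exact: LB.
have Me : t_multiplier la ra eta.
  split.
    case=> a m b [a' m' b']; rewrite /tadd /eta /c /tmul /=; congr Tri.
    - by rewrite mulrDr.
    - by rewrite lD !r0l !addr0.
    - by rewrite mulrDr.
  have Et : eta (tone A B M) = c by rewrite /eta /c /tmul /tone /= !mulr1 l0r r0l addr0.
  case=> a m b; rewrite Et; split; first done.
  rewrite /eta /c /tmul /=; congr Tri.
  - exact: C1.
  - by rewrite l0r r0l add0r addr0 Ci.
  - exact: C3.
split.
  by exists delta, eta; split; [exact: Dd | split; [exact: Me | exact: Dec]].
move=> h1.
have c1z : a1 phi 1 = 0 by have := f_equal (@tA _ _ _) h1; rewrite /tone CA.
have c3z : b3 phi 1 = 0 by have := f_equal (@tB _ _ _) h1; rewrite /tone CB.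
have Hpd : forall X, phi X = delta X.
  move=> X; rewrite Dec; case: X => a m b; rewrite /tadd /eta /c /tmul /= c1z c3z !mul0r l0l r0l !addr0.
  by [].
split; first exact: hadd.
by move=> X Y; rewrite !Hpd; exact: (proj2 Dd).
Qed.
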